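(* Let $n\ge2$, $1\le i\le n-1$ and $R>0$. Then $D^n_{i,R}$ is a Banach space with respect to $\|\cdot\|$. In particular, $D^n_{i,R}$ is the completion of $C_c([0,\infty))\cap D^n_{i,R}$ with respect to $\|\cdot\|$.
   Context: $C_b(0,\infty)$ = continuous functions on $(0,\infty)$ with support bounded from above. $D^n_i=\{\zeta\in C_b(0,\infty):\lim_{t\to0}t^{n-i}\zeta(t)=0,\ \lim_{t\to0}\int_t^\infty\zeta(s)s^{n-i-1}ds\text{ exists and is finite}\}$; $D^n_{i,R}=\{\zeta\in D^n_i:\mathrm{supp}\,\zeta\subset(0,R]\}$. Elements of $C_c([0,\infty))$ are regarded as functions on $(0,\infty)$ by restriction. The norm is $\|\zeta\|=\sup_{t>0}\left|(n-i)\int_t^\infty\zeta(s)s^{n-i-1}ds\right|+\sup_{t>0}\left|t^{n-i}\zeta(t)+(n-i)\int_t^\infty\zeta(s)s^{n-i-1}ds\right|$. *)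

(* Defs.v *)
From HB Require Import structures.
From mathcomp Require Import all_boot all_order all_algebra.
From mathcomp Require Import all_classical all_reals all_analysis.
Set Implicit Arguments. Unset Strict Implicit. Unset Printing Implicit Defensive.
Import Order.TTheory GRing.Theory Num.Theory.
Import numFieldNormedType.Exports.
Local Open Scope classical_set_scope.
Local Open Scope ring_scope.

Section Defs.
Variable R : realType.

Definition tailint (n i : nat) (zeta : R -> R) (t : R) : R :=
  Rintegral lebesgue_measure `[t, +oo[ (fun s => zeta s * s ^+ (n - i - 1)).

(* functions on (0,oo) are represented by functions R -> R vanishing on (-oo,0] *)
Definition Cb (zeta : R -> R) : Prop :=
  {within `]0, +oo[, continuous zeta} /\
  (forall t, t <= 0 -> zeta t = 0) /\
  (exists M : R, forall t, M < t -> zeta t = 0).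

Definition Dn (n i : nat) (zeta : R -> R) : Prop :=
  Cb zeta /\
  (t ^+ (n - i) * zeta t @[t --> 0^'+] --> 0) /\
  (exists L : R, tailint n i zeta t @[t --> 0^'+] --> L).

Definition DnR (n i : nat) (Rb : R) (zeta : R -> R) : Prop :=
  Dn n i zeta /\ (forall t, Rb < t -> zeta t = 0).

Definition Dnorm (n i : nat) (zeta : R -> R) : R :=
  sup [set `|(n - i)%:R * tailint n i zeta t| | t in `]0, +oo[] +
  sup [set `|t ^+ (n - i) * zeta t + (n - i)%:R * tailint n i zeta t|
        | t in `]0, +oo[].

(* elements of C_c([0,oo)), regarded as functions on (0,oo) *)
Definition Cc0 (f : R -> R) : Prop :=
  {within `[0, +oo[, continuous f} /\
  (exists M : R, forall t, 0 <= t -> M < t -> f t = 0).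

End Defs.

(* Main.v *)
Require Import Defs.
From HB Require Import structures.
From mathcomp Require Import all_boot all_order all_algebra.
From mathcomp Require Import all_classical all_reals all_analysis.
From mathcomp Require Import ring lra.
Import Order.TTheory GRing.Theory Num.Theory Num.Def.
Import numFieldNormedType.Exports.
Local Open Scope classical_set_scope.
Local Open Scope ring_scope.
Set Implicit Arguments. Unset Strict Implicit. Unset Printing Implicit Defensive.

Section Aux.
Context (R : realType) (n i : nat).
Notation mu := (@lebesgue_measure R).
Definition gg (f : R -> R) := fun s : R => f s * s ^+ (n - i - 1).

Lemma open_pos : open (`]0, +oo[%classic : set R).
Proof. exact: interval_open. Qed.

Lemma cont_pos (f : R -> R) x : {within `]0, +oo[, continuous f} -> 0 < x ->
  {for x, continuous f}.
Proof.
move=> hf x0; move: hf; rewrite continuous_open_subspace; last exact: open_pos.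
by apply; rewrite inE /= in_itv /= x0.
Qed.

Lemma cont_gg (f : R -> R) x : {within `]0, +oo[, continuous f} -> 0 < x ->
  {for x, continuous (gg f)}.
Proof.
move=> hf x0; apply: cvgM; first exact: cont_pos.
exact: exprn_continuous.
Qed.

Lemma restrict_cut (h : R -> R) t b : t <= b -> (forall s, b < s -> h s = 0) ->
  h \_ `[t, +oo[ = h \_ `[t, b].
Proof.
move=> tb hb; apply/funext => s; rewrite /patch !mem_setE !in_itv /= andbT.
case: (leP t s) => //= ts; case: (leP s b) => //= /hb //.
Qed.

Lemma integrable_gg (f : R -> R) t b : 0 < t ->
  {within `]0, +oo[, continuous f} -> (forall s, b < s -> f s = 0) ->
  mu.-integrable `[t, +oo[ (EFin \o gg f).
Proof.
move=> t0 hf hb; pose c := maxr t b.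
apply/(@integrable_mkcond _ _ _ mu _ (EFin \o gg f) (measurable_itv `[t, +oo[)).
rewrite restrict_EFin (@restrict_cut _ t c); last first.
- by move=> s cs; rewrite /gg hb ?mul0r // (le_lt_trans _ cs) // le_max lexx orbT.
- by rewrite le_max lexx.
rewrite -restrict_EFin; apply/(@integrable_mkcond _ _ _ mu _ _ (measurable_itv `[t, c])).
apply: continuous_compact_integrable; first exact: segment_compact.
apply: continuous_in_subspaceT => x; rewrite inE /= in_itv /= => /andP[tx _].
exact: cont_gg (lt_le_trans t0 tx).
Qed.
End Aux.

Section Aux2.
Context (R : realType) (n i : nat).
Notation mu := (@lebesgue_measure R).

Lemma bound_seg (h : R -> R) a b K : a <= b ->
  mu.-integrable `[a, b] (EFin \o h) ->
  (forall s, a <= s -> s <= b -> `|h s| <= K) ->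
  `|\int[mu]_(s in `[a, b]) h s| <= K * (b - a).
Proof.
move=> ab ih hK.
apply: le_trans (le_normr_Rintegral _ _) _ => //.
apply: le_trans (@le_Rintegral _ _ _ _ _ _ (cst K) _ _ _ _) _ => //.
- exact: integrable_norm.
- apply: continuous_compact_integrable; first exact: segment_compact.
  exact/continuous_subspaceT/cst_continuous.
- by move=> x; rewrite /= in_itv /= => /andP[? ?]; apply: hK.
rewrite Rintegral_cst //= lebesgue_measure_itv /= lte_fin.
case: ltP => ab' /=.
  by [].
have -> : b = a by apply/le_anti; rewrite ab ab'.
by rewrite subrr !mulr0.
Qed.
End Aux2.

Section Tail.
Context (R : realType) (n i : nat).
Notation mu := (@lebesgue_measure R).
Notation gg := (@gg R n i).

Lemma tailE f t : tailint n i f t = \int[mu]_(s in `[t, +oo[) gg f s.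
Proof. by []. Qed.

Lemma tail_split (f : R -> R) (t d : R) : t <= d ->
  mu.-integrable `[t, +oo[ (EFin \o gg f) ->
  tailint n i f t = \int[mu]_(s in `[t, d]) gg f s + tailint n i f d.
Proof.
move=> td hi; rewrite !tailE.
have := @Rintegral_itvB R (gg f) (BLeft t) (BInfty _ false) d hi.
rewrite bnd_simp td => /(_ isT isT) => h.
rewrite -(@Rintegral_itv_obnd_cbnd _ d); last first.
  apply: integrableS hi => //; apply: subset_itvr; rewrite bnd_simp //.
by rewrite -h addrC subrK.
Qed.

Lemma tail_cut (f : R -> R) (t b : R) : t <= b -> (forall s, b < s -> f s = 0) ->
  tailint n i f t = \int[mu]_(s in `[t, b]) gg f s.
Proof.
move=> tb hb; rewrite tailE Rintegral_mkcond (@restrict_cut _ _ t b) //.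
  by rewrite -Rintegral_mkcond.
by move=> s /hb; rewrite /gg => ->; rewrite mul0r.
Qed.

Lemma tail_bound (f : R -> R) (t b K : R) : 0 < t ->
  {within `]0, +oo[, continuous f} -> (forall s, b < s -> f s = 0) ->
  (forall s, t <= s -> `|gg f s| <= K) ->
  `|tailint n i f t| <= K * (maxr t b - t).
Proof.
move=> t0 hf hb hK.
have tc : t <= maxr t b by rewrite le_max lexx.
rewrite (@tail_cut _ _ (maxr t b)) //; last first.
  by move=> s cs; apply: hb; rewrite (le_lt_trans _ cs) // le_max lexx orbT.
apply: bound_seg => //; last by move=> s ts _; apply: hK.
apply: continuous_compact_integrable; first exact: segment_compact.
apply: continuous_in_subspaceT => x; rewrite inE /= in_itv /= => /andP[tx _].
exact: cont_gg (lt_le_trans t0 tx).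
Qed.
End Tail.

Lemma compact_bnd (R : realType) (h : R -> R) a b :
  (forall x, a <= x -> x <= b -> {for x, continuous h}) ->
  exists K, 0 <= K /\ forall x, a <= x -> x <= b -> `|h x| <= K.
Proof.
move=> hc.
have hc' : {within `[a, b], continuous h}.
  apply: continuous_in_subspaceT => x; rewrite inE /= in_itv /= => /andP[ax xb].
  exact: hc.
have /compact_bounded[M [_ HM]] := continuous_compact hc' (@segment_compact _ a b).
exists (maxr 0 (M + 1)); split; first by rewrite le_max lexx.
move=> x ax xb; rewrite le_max; apply/orP; right.
apply: (HM (M + 1)); first by rewrite ltrDl.
by exists x => //; rewrite /= in_itv /= ax xb.
Qed.

Lemma near0_bnd (R : realType) (h : R -> R) (L : R) :
  h t @[t --> 0^'+] --> L ->
  exists2 d, 0 < d & forall t, 0 < t -> t < d -> `|h t| <= `|L| + 1.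
Proof.
move/cvgrPdist_le => /(_ 1 ltr01) H.
have := H; rewrite /at_right /within /= => /nbhs_ballP[d d0 Hd].
exists d => // t t0 td.
have := Hd t; rewrite /ball /= sub0r normrN gtr0_norm // => /(_ td t0) h1.
rewrite -[h t](subrKC L) (le_trans (ler_normD _ _)) //.
by rewrite lerD2l -normrN opprB.
Qed.

Section Main.
Context (R : realType) (n i : nat) (Rb : R).
Hypothesis hw : (0 < n - i)%N.
Hypothesis Rb0 : 0 < Rb.
Notation mu := (@lebesgue_measure R).
Notation gg := (@gg R n i).
Notation D := (DnR n i Rb).
Definition Af (f : R -> R) t := (n - i)%:R * tailint n i f t.
Definition Bf (f : R -> R) t := t ^+ (n - i) * f t + Af f t.
Definition S1 f := [set `|Af f t| | t in `]0, +oo[].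
Definition S2 f := [set `|Bf f t| | t in `]0, +oo[].

Lemma DnormE f : Dnorm n i f = sup (S1 f) + sup (S2 f).
Proof. by []. Qed.

Lemma D_cont f : D f -> {within `]0, +oo[, continuous f}.
Proof. by move=> [[[h _] _] _]. Qed.
Lemma D_neg f t : D f -> t <= 0 -> f t = 0.
Proof. by move=> [[[_ [h _]] _] _] t0; apply: h. Qed.
Lemma D_supp f t : D f -> Rb < t -> f t = 0.
Proof. by case=> _ h; apply: h. Qed.
Lemma D_lim f : D f -> t ^+ (n - i) * f t @[t --> 0^'+] --> 0.
Proof. by move=> [[_ [h1 h2]] _]. Qed.
Lemma D_tail f : D f -> exists L : R, tailint n i f t @[t --> 0^'+] --> L.
Proof. by move=> [[_ [h1 h2]] _]. Qed.
Lemma D_int f t : D f -> 0 < t -> mu.-integrable `[t, +oo[ (EFin \o gg f).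
Proof. by move=> hf t0; apply: (@integrable_gg R n i f t Rb t0 (D_cont hf)) => s; apply: D_supp. Qed.

Lemma ggE f s : s * gg f s = s ^+ (n - i) * f s.
Proof.
by rewrite /gg mulrCA -exprS mulrC subn1 prednK.
Qed.

Lemma tailD f g t : D f -> D g -> 0 < t ->
  tailint n i (f \+ g) t = tailint n i f t + tailint n i g t.
Proof.
move=> hf hg t0; rewrite !tailE -RintegralD //; try exact: D_int.
by apply: eq_Rintegral => s _; rewrite /gg /= mulrDl.
Qed.

Lemma tailZ a f t : D f -> 0 < t ->
  tailint n i (fun s => a * f s) t = a * tailint n i f t.
Proof.
move=> hf t0; rewrite !tailE -RintegralZl //; last exact: D_int.
by apply: eq_Rintegral => s _; rewrite /gg /= mulrA.
Qed.

Lemma near_pos (P : R -> Prop) : (forall t, 0 < t -> P t) -> \forall t \near 0^'+, P t.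
Proof. by move=> h; near=> t; apply: h; near: t; apply: nbhs_right_gt. Unshelve. all: by end_near. Qed.

Lemma D0 : D (fun _ => 0).
Proof.
split; last by [].
split; first split.
- by apply: continuous_subspaceT; apply: cst_continuous.
- by split => //; exists 0.
split.
- by under eq_fun do rewrite mulr0; apply: cvg_cst.
exists 0; apply: cvg_trans (near_eq_cvg _) (cvg_cst 0).
apply: near_pos => t t0; rewrite tailE /=; symmetry.
transitivity (\int[mu]_(s in `[t, +oo[) (0:R)).
  by apply: eq_Rintegral => s _; rewrite /gg mul0r.
by rewrite Rintegral_cst // mul0r.
Qed.

Lemma DD f g : D f -> D g -> D (f \+ g).
Proof.
move=> hf hg; split; last by move=> t tR; rewrite /= (D_supp hf) // (D_supp hg) // addr0.
split; first split.
- have := D_cont hf; have := D_cont hg.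
  rewrite !continuous_open_subspace; try exact: open_pos.
  by move=> h1 h2 x xA; apply: cvgD; [apply: h2|apply: h1].
- split; first by move=> t t0; rewrite /= (D_neg hf) // (D_neg hg) // addr0.
  by exists Rb => t tR; rewrite /= (D_supp hf) // (D_supp hg) // addr0.
split.
- under eq_fun do rewrite mulrDr.
  have h := cvgD (D_lim hf) (D_lim hg); rewrite addr0 in h; exact: h.
have [L1 h1] := D_tail hf; have [L2 h2] := D_tail hg.
exists (L1 + L2); apply: cvg_trans (near_eq_cvg _) (cvgD h1 h2).
by apply: near_pos => t t0; rewrite tailD.
Qed.

Lemma DZ a f : D f -> D (fun t => a * f t).
Proof.
move=> hf; split; last by move=> t tR; rewrite /= (D_supp hf) // mulr0.
split; first split.
- have := D_cont hf.
  rewrite !continuous_open_subspace; try exact: open_pos.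
  by move=> h1 x xA; apply: cvgM; [apply: cvg_cst|apply: h1].
- split; first by move=> t t0; rewrite /= (D_neg hf) // mulr0.
  by exists Rb => t tR; rewrite /= (D_supp hf) // mulr0.
split.
- under eq_fun do rewrite mulrCA.
  have h := cvgM (cvg_cst a) (D_lim hf); rewrite mulr0 in h; exact: h.
have [L1 h1] := D_tail hf.
exists (a * L1); apply: cvg_trans (near_eq_cvg _) (cvgM (cvg_cst a) h1).
by apply: near_pos => t t0; rewrite tailZ.
Qed.

Lemma pos_itv (t : R) : (`]0, +oo[%classic : set R) t = (0 < t).
Proof. by rewrite /= in_itv /= andbT. Qed.

Lemma bnd_P f : D f -> exists K, forall t, 0 < t -> `|t ^+ (n - i) * f t| <= K.
Proof.
move=> hf; have [d d0 Hd] := near0_bnd (D_lim hf).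
have [K [K0 HK]] := @compact_bnd R (fun t => t ^+ (n - i) * f t) d (maxr d Rb)
  (fun x dx _ => cvgM (@exprn_continuous R (n - i) x) (cont_pos (D_cont hf) (lt_le_trans d0 dx))).
exists (maxr (`|0 : R| + 1) K) => t t0.
case: (ltP t d) => td; first by rewrite le_max Hd.
case: (leP t (maxr d Rb)) => tm; first by rewrite le_max HK ?orbT.
rewrite (D_supp hf) ?mulr0 ?normr0; last by move: tm; rewrite gt_max => /andP[].
by rewrite le_max K0 orbT.
Qed.

Lemma maxr_aux (t : R) : 0 < t -> maxr t Rb - t <= Rb.
Proof.
move=> t0; case: (leP t Rb) => tR.
  by rewrite lerBlDr lerDl ltW.
by rewrite subrr ltW.
Qed.

Lemma bnd_T f : D f -> exists K, forall t, 0 < t -> `|tailint n i f t| <= K.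
Proof.
move=> hf; have [L hL] := D_tail hf.
have [d d0 Hd] := near0_bnd hL.
have [K [K0 HK]] := @compact_bnd R (gg f) d (maxr d Rb)
  (fun x dx _ => @cont_gg R n i f x (D_cont hf) (lt_le_trans d0 dx)).
exists (maxr (`|L| + 1) (K * Rb)) => t t0.
case: (ltP t d) => td; first by rewrite le_max Hd.
rewrite le_max; apply/orP; right.
apply: le_trans (@tail_bound R n i f t Rb K t0 (D_cont hf) (fun s => D_supp hf) _) _.
  move=> s ts; case: (leP s (maxr d Rb)) => sm; first by apply: HK => //; apply: le_trans ts.
  rewrite /gg (D_supp hf) ?mul0r ?normr0 //; by move: sm; rewrite gt_max => /andP[].
by apply: ler_wpM2l => //; apply: maxr_aux.
Qed.

Lemma ubS1 f : D f -> has_ubound (S1 f).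
Proof.
move=> hf; have [K HK] := bnd_T hf.
exists ((n - i)%:R * K) => _ [t t0 <-]; rewrite pos_itv in t0.
by rewrite /Af normrM ger0_norm // ler_wpM2l // HK.
Qed.

Lemma ubS2 f : D f -> has_ubound (S2 f).
Proof.
move=> hf; have [K HK] := bnd_T hf; have [K' HK'] := bnd_P hf.
exists (K' + (n - i)%:R * K) => _ [t t0 <-]; rewrite pos_itv in t0.
rewrite /Bf (le_trans (ler_normD _ _)) // lerD ?HK' //.
by rewrite /Af normrM ger0_norm // ler_wpM2l // HK.
Qed.

Lemma A_le f t : D f -> 0 < t -> `|Af f t| <= sup (S1 f).
Proof. by move=> hf t0; apply: (ub_le_sup (ubS1 hf)); exists t; rewrite ?pos_itv. Qed.
Lemma B_le f t : D f -> 0 < t -> `|Bf f t| <= sup (S2 f).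
Proof. by move=> hf t0; apply: (ub_le_sup (ubS2 hf)); exists t; rewrite ?pos_itv. Qed.
Lemma S1_ge0 f : D f -> 0 <= sup (S1 f).
Proof. by move=> hf; apply: le_trans (A_le hf ltr01). Qed.
Lemma S2_ge0 f : D f -> 0 <= sup (S2 f).
Proof. by move=> hf; apply: le_trans (B_le hf ltr01). Qed.
Lemma Dnorm_ge0 f : D f -> 0 <= Dnorm n i f.
Proof. by move=> hf; rewrite DnormE addr_ge0 // ?S1_ge0 ?S2_ge0. Qed.
Lemma A_leD f t : D f -> 0 < t -> `|Af f t| <= Dnorm n i f.
Proof. by move=> hf t0; rewrite DnormE -[X in X <= _]addr0 lerD ?A_le ?S2_ge0. Qed.
Lemma B_leD f t : D f -> 0 < t -> `|Bf f t| <= Dnorm n i f.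
Proof. by move=> hf t0; rewrite DnormE -[X in X <= _]add0r lerD ?B_le ?S1_ge0. Qed.
Lemma P_le f t : D f -> 0 < t -> `|t ^+ (n - i) * f t| <= Dnorm n i f.
Proof.
move=> hf t0; have -> : t ^+ (n - i) * f t = Bf f t - Af f t by rewrite /Bf addrK.
by rewrite DnormE (le_trans (ler_normB _ _)) // addrC lerD ?A_le ?B_le.
Qed.

Lemma Dnorm_le f c1 c2 : (forall t, 0 < t -> `|Af f t| <= c1) ->
  (forall t, 0 < t -> `|Bf f t| <= c2) -> Dnorm n i f <= c1 + c2.
Proof.
move=> h1 h2; rewrite DnormE lerD //; apply: ge_sup.
- by exists `|Af f 1|, 1 => //; rewrite pos_itv.
- by move=> _ [t t0 <-]; rewrite pos_itv in t0; apply: h1.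
- by exists `|Bf f 1|, 1 => //; rewrite pos_itv.
- by move=> _ [t t0 <-]; rewrite pos_itv in t0; apply: h2.
Qed.

Lemma AD f g t : D f -> D g -> 0 < t -> Af (f \+ g) t = Af f t + Af g t.
Proof. by move=> hf hg t0; rewrite /Af tailD // mulrDr. Qed.
Lemma BD f g t : D f -> D g -> 0 < t -> Bf (f \+ g) t = Bf f t + Bf g t.
Proof. by move=> hf hg t0; rewrite /Bf AD // /= mulrDr addrACA. Qed.
Lemma AZ a f t : D f -> 0 < t -> Af (fun s => a * f s) t = a * Af f t.
Proof. by move=> hf t0; rewrite /Af tailZ // mulrCA. Qed.
Lemma BZ a f t : D f -> 0 < t -> Bf (fun s => a * f s) t = a * Bf f t.
Proof. by move=> hf t0; rewrite /Bf AZ // mulrDr mulrCA. Qed.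

Lemma sup_scale (A : set R) (h : R -> R) c : 0 <= c -> A !=set0 ->
  has_ubound [set h t | t in A] ->
  sup [set c * h t | t in A] = c * sup [set h t | t in A].
Proof.
move=> c0 [a aA] [M HM]; case: (eqVneq c 0) => [->|cn0].
  have -> : [set 0 * h t | t in A] = [set 0].
    apply/seteqP; split => x /=; first by case=> t _ <-; rewrite mul0r.
    by move=> ->; exists a => //; rewrite mul0r.
  by rewrite sup1 mul0r.
have cp : 0 < c by rewrite lt_def cn0 c0.
have ubc : has_ubound [set c * h t | t in A].
  by exists (c * M) => _ [t tA <-]; rewrite ler_wpM2l // HM //; exists t.
apply/le_anti/andP; split.
  apply: ge_sup; first by exists (c * h a), a.
  move=> _ [t tA <-]; rewrite ler_wpM2l //; apply: (ub_le_sup (ex_intro _ M HM)).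
  by exists t.
have : sup [set h t | t in A] <= c^-1 * sup [set c * h t | t in A].
  apply: ge_sup; first by exists (h a), a.
  move=> _ [t tA <-]; rewrite ler_pdivlMl //; apply: (ub_le_sup ubc).
  by exists t.
move/(ler_wpM2l c0); rewrite mulrA mulfV ?mul1r //.
Qed.

Lemma Dnorm0 f : D f -> Dnorm n i f = 0 -> f = (fun _ => 0).
Proof.
move=> hf h0; apply/funext => t; case: (leP t 0) => t0; first exact: D_neg.
have := P_le hf t0; rewrite h0 normr_le0 mulf_eq0 expf_eq0 (gt_eqF t0) andbF.
by move/eqP.
Qed.

Lemma DnormZ a f : D f -> Dnorm n i (fun t => a * f t) = `|a| * Dnorm n i f.
Proof.
move=> hf; rewrite !DnormE mulrDr.
have ne : (`]0, +oo[%classic : set R) !=set0 by exists 1; rewrite pos_itv.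
have -> : S1 (fun t => a * f t) = [set `|a| * `|Af f t| | t in `]0, +oo[].
  by apply: eq_imagel => t; rewrite pos_itv => t0; rewrite AZ // normrM.
have -> : S2 (fun t => a * f t) = [set `|a| * `|Bf f t| | t in `]0, +oo[].
  by apply: eq_imagel => t; rewrite pos_itv => t0; rewrite BZ // normrM.
by rewrite !sup_scale //; [apply: ubS2|apply: ubS1].
Qed.

Lemma Dnorm_tri f g : D f -> D g -> Dnorm n i (f \+ g) <= Dnorm n i f + Dnorm n i g.
Proof.
move=> hf hg; rewrite (DnormE f) (DnormE g).
rewrite addrACA; apply: Dnorm_le => t t0.
  by rewrite AD // (le_trans (ler_normD _ _)) // lerD ?A_le.
by rewrite BD // (le_trans (ler_normD _ _)) // lerD ?B_le.
Qed.

Lemma pow_le (s d : R) m : 0 <= s -> s <= d -> s ^+ m <= d ^+ m.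
Proof. by move=> s0 sd; apply: lerXn2r => //; rewrite nnegrE (le_trans s0). Qed.

Lemma near0_close (h : R -> R) L : h t @[t --> 0^'+] --> L ->
  forall eta, 0 < eta -> exists2 d, 0 < d & forall t, 0 < t -> t < d -> `|h t - L| <= eta.
Proof.
move/cvgrPdist_le => H eta eta0; have := H eta eta0.
rewrite /at_right /within /= => /nbhs_ballP[d d0 Hd].
exists d => // t t0 td.
have := Hd t; rewrite /ball /= sub0r normrN gtr0_norm // => /(_ td t0).
by rewrite -normrN opprB.
Qed.

Lemma subE (f g : R -> R) : f \- g = f \+ (fun s => -1 * g s).
Proof. by apply/funext => s /=; rewrite mulN1r. Qed.

Lemma AB f g t : D f -> D g -> 0 < t -> Af (f \- g) t = Af f t - Af g t.
Proof. by move=> hf hg t0; rewrite subE AD ?AZ ?mulN1r //; apply: DZ. Qed.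

Lemma BB f g t : D f -> D g -> 0 < t -> Bf (f \- g) t = Bf f t - Bf g t.
Proof. by move=> hf hg t0; rewrite subE BD ?BZ ?mulN1r //; apply: DZ. Qed.

Lemma density z e : D z -> 0 < e -> exists phi, D phi /\
  (exists f, Cc0 f /\ forall t, 0 < t -> phi t = f t) /\ Dnorm n i (z \- phi) < e.
Proof.
move=> hz e0.
have w0 : 0 < (n - i)%:R :> R by rewrite ltr0n.
pose eta := e / (6 * (n - i) + 3)%:R.
have eta0 : 0 < eta by rewrite divr_gt0 // ltr0n addn3.
have [L hL] := D_tail hz.
have [d1 d10 H1] := near0_close (D_lim hz) eta0.
have [d2 d20 H2] := near0_close hL eta0.
pose dl := minr d1 d2 / 2.
have dl0 : 0 < dl by rewrite divr_gt0 // lt_min d10 d20.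
have dlm : dl < minr d1 d2 by rewrite /dl ltr_pdivrMr // ltr_pMr ?ltr1n // lt_min d10 d20.
have dl1 : forall t, 0 < t -> t <= dl ->
    `|t ^+ (n - i) * z t| <= eta /\ `|tailint n i z t - L| <= eta.
  move=> t t0 tdl; have := le_lt_trans tdl dlm; rewrite lt_min => /andP[td1 td2].
  by split; [have := H1 t t0 td1; rewrite subr0|apply: H2].
pose f0 := fun t => z (maxr t dl).
pose phi := fun t => if 0 < t then f0 t else 0.
have zc := cont_pos (D_cont hz).
have f0c : continuous f0.
  move=> x; apply: continuous_comp; last first.
    by apply: zc; rewrite (lt_le_trans dl0) // le_max lexx orbT.
  by apply: (@continuous_max R R (fun t : R => t) (fun _ : R => dl) x);
    [apply: cvg_id|apply: cvg_cst].
have phiE : forall t, 0 < t -> phi t = f0 t by move=> t t0; rewrite /phi t0.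
have maxl : forall t, t <= dl -> maxr t dl = dl by move=> t tdl; rewrite max_r.
have maxg : forall t, dl <= t -> maxr t dl = t by move=> t tdl; rewrite max_l.
have phi_supp : forall t, Rb < t -> phi t = 0.
  move=> t tR; rewrite /phi; case: ifP => // t0; apply: (D_supp hz).
  by rewrite (lt_le_trans tR) // le_max lexx.
have phic : {within `]0, +oo[, continuous phi}.
  rewrite continuous_open_subspace; last exact: open_pos.
  move=> x; rewrite inE /= in_itv /= andbT => x0.
  rewrite /continuous_at (phiE x x0).
  have ne : \forall t \near x, f0 t = phi t.
    near=> t; rewrite phiE //; near: t; exact: lt_nbhsr.
  exact: cvg_trans (near_eq_cvg ne) (f0c x).
have phiI : forall t, 0 < t -> mu.-integrable `[t, +oo[ (EFin \o gg phi).
  by move=> t t0; apply: (@integrable_gg R n i phi t Rb t0 phic phi_supp).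
pose h := fun s : R => z dl * s ^+ (n - i - 1).
have hI : forall a b, mu.-integrable `[a, b] (EFin \o h).
  move=> a b; apply: continuous_compact_integrable; first exact: segment_compact.
  apply: continuous_subspaceT => x.
  by apply: cvgM; [apply: cvg_cst|apply: exprn_continuous].
have tphi2 : forall t, dl <= t -> tailint n i phi t = tailint n i z t.
  move=> t tdl; rewrite !tailE; apply: eq_Rintegral => s.
  rewrite inE /= in_itv /= andbT => ts.
  by rewrite /gg phiE ?(lt_le_trans dl0) ?(le_trans tdl) // /f0 maxg // (le_trans tdl).
have tphi : forall t, 0 < t -> t <= dl ->
    tailint n i phi t = \int[mu]_(s in `[t, dl]) h s + tailint n i z dl.
  move=> t t0 tdl; rewrite (tail_split tdl (phiI t t0)) tphi2 //; congr (_ + _).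
  apply: eq_Rintegral => s; rewrite inE /= in_itv /= => /andP[ts sdl].
  by rewrite /gg phiE ?(lt_le_trans t0) // /f0 maxl.
have hb : forall t b, 0 <= t -> t <= b -> b <= dl ->
    `|\int[mu]_(s in `[t, b]) h s| <= `|z dl| * dl ^+ (n - i - 1) * (b - t).
  move=> t b t0 tb bdl; apply: bound_seg => // s ts sb.
  have sdl := le_trans sb bdl.
  have s0 : 0 <= s := le_trans t0 ts.
  rewrite /h normrM (ger0_norm (exprn_ge0 _ s0)) ler_wpM2l //.
  exact: pow_le.
have Dphi : D phi.
  split; last exact: phi_supp.
  split; first split => //.
    split; first by move=> t t0; rewrite /phi ltNge t0.
    by exists Rb.
  split.
    have ne : \forall t \near 0^'+, t ^+ (n - i) * z dl = t ^+ (n - i) * phi t.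
      near=> t; rewrite phiE // /f0 maxl //; apply: ltW.
      near: t; exact: nbhs_right_lt.
    apply: cvg_trans (near_eq_cvg ne) _.
    have c0 : (fun t => t ^+ (n - i)) @ 0^'+ --> (0:R).
      have hw' : (n - i == 0)%N = false by apply/negbTE; rewrite -lt0n.
      have := cvg_at_right_filter (@exprn_continuous R (n - i) 0).
      by rewrite expr0n hw'.
    have h0 := cvgM c0 (cvg_cst (z dl)); rewrite mul0r in h0; exact: h0.
  exists (\int[mu]_(s in `[0, dl]) h s + tailint n i z dl).
  apply/cvgrPdist_le => eps eps0.
  pose C := `|z dl| * dl ^+ (n - i - 1) + 1.
  have C0 : 0 < C by rewrite ltr_pwDr // mulr_ge0 // exprn_ge0 // ltW.
  near=> t.
  have t0 : 0 < t by near: t; exact: nbhs_right_gt.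
  have tdl : t < dl by near: t; exact: nbhs_right_lt.
  have teps : t < eps / C by near: t; apply: nbhs_right_lt; rewrite divr_gt0.
  rewrite tphi // ?ltW //.
  have := @Rintegral_itvB R h (BLeft 0) (BRight dl) t (hI 0 dl).
  rewrite !bnd_simp (ltW t0) (ltW tdl) => /(_ isT isT).
  rewrite Rintegral_itv_obnd_cbnd; last first.
    by apply: integrableS (hI t dl) => //; apply: subset_itvr; rewrite bnd_simp.
  move=> <-; rewrite opprD addrACA subrr addr0 opprB addrC subrK.
  apply: le_lt_trans (hb 0 t (lexx 0) (ltW t0) (ltW tdl)) _.
  rewrite subr0; rewrite -(ltr_pM2l C0) mulrCA divff ?gt_eqF // mulr1 in teps.
  apply: le_lt_trans teps; apply: ler_wpM2r; first exact: ltW.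
  by rewrite /C lerDl.
exists phi; split => //; split.
  exists f0; split => //; split; first exact: continuous_subspaceT.
  exists Rb => t _ tR; apply: (D_supp hz).
  by rewrite (lt_le_trans tR) // le_max lexx.
have ew : dl ^+ (n - i) = dl ^+ (n - i - 1) * dl by rewrite -exprSr subn1 prednK.
have K1 : `|z dl| * dl ^+ (n - i - 1) * dl <= eta.
  have := proj1 (dl1 dl dl0 (lexx dl)).
  rewrite normrM (ger0_norm (exprn_ge0 _ (ltW dl0))) ew => H.
  by apply: le_trans H; rewrite -mulrA mulrC lexx.
have eta_ge0 := ltW eta0.
apply: (@le_lt_trans _ _ ((n - i)%:R * (3 * eta) + (2 * eta + (n - i)%:R * (3 * eta)))).
  have hA : forall t, 0 < t -> `|Af (z \- phi) t| <= (n - i)%:R * (3 * eta).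
    move=> t t0; rewrite AB //; case: (leP dl t) => tdl.
      by rewrite /Af tphi2 // subrr normr0 mulr_ge0 // ?mulr_ge0 // ltW.
    rewrite /Af (tphi t t0 (ltW tdl)) -mulrBr normrM (ger0_norm (ltW w0)).
    apply: ler_wpM2l; first exact: ltW.
    have [_ Ht] := dl1 t t0 (ltW tdl).
    have [_ Hdl] := dl1 dl dl0 (lexx dl).
    have HI := hb t dl (ltW t0) (ltW tdl) (lexx dl).
    have HI' : `|\int[mu]_(s in `[t, dl]) h s| <= eta.
      apply: le_trans HI (le_trans _ K1); apply: ler_wpM2l.
        by rewrite mulr_ge0 // exprn_ge0 // ltW.
      by rewrite lerBlDr lerDl; apply: ltW.
    rewrite (_ : tailint n i z t - _ = (tailint n i z t - L) - (tailint n i z dl - L) -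
       \int[mu]_(s in `[t, dl]) h s); last by ring.
    rewrite (_ : 3 * eta = eta + eta + eta); last by ring.
    by rewrite (le_trans (ler_normB _ _)) // lerD // (le_trans (ler_normB _ _)) // lerD.
  apply: Dnorm_le => // t t0; rewrite /Bf.
  apply: le_trans (ler_normD _ _) _; rewrite lerD ?hA //=.
  rewrite /phi t0 /f0; case: (leP dl t) => tdl.
    by rewrite subrr mulr0 normr0 mulr_ge0.
  rewrite mulrBr.
  have [Ht _] := dl1 t t0 (ltW tdl).
  apply: le_trans (ler_normB _ _) _.
  rewrite (_ : 2 * eta = eta + eta); last by ring.
  apply: lerD => //.
  rewrite normrM (ger0_norm (exprn_ge0 _ (ltW t0))).
  apply: le_trans K1; rewrite -mulrA -ew mulrC; apply: ler_wpM2l => //.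
  by apply: pow_le; apply: ltW.
have e6 : 0 < (6 * (n - i) + 3)%:R :> R by rewrite ltr0n addn3.
have -> : e = (6 * (n - i) + 3)%:R * eta by rewrite /eta mulrC divfK // gt_eqF.
rewrite natrD natrM.
set W := (n - i)%:R.
rewrite (_ : W * (3 * eta) + (2 * eta + W * (3 * eta)) = (6%:R * W + 2) * eta); last by ring.
by rewrite ltr_pM2r // ltrD2l ltr_nat.
Unshelve. all: by end_near.
Qed.

Lemma flim_le {T : Type} (F : set_system T) {FF : ProperFilter F} (s : T -> R) l c :
  s x @[x --> F] --> l -> (\forall x \near F, s x <= c) -> l <= c.
Proof.
move=> hs hc; rewrite -(cvg_lim _ hs) //; apply: limr_le => //.
by apply/cvg_ex; exists l.
Qed.

Definition CbR (f : R -> R) :=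
  {within `]0, +oo[, continuous f} /\ (forall s, Rb < s -> f s = 0).

Lemma CbR_D f : D f -> CbR f.
Proof. by move=> hf; split; [exact: D_cont|move=> s; apply: D_supp]. Qed.

Lemma CbR_B f g : CbR f -> CbR g -> CbR (f \- g).
Proof.
move=> [cf sf] [cg sg]; split; last by move=> s sR; rewrite /= sf // sg // subr0.
move: cf cg; rewrite !continuous_open_subspace; try exact: open_pos.
by move=> h1 h2 x xA; apply: cvgB; [apply: h1|apply: h2].
Qed.

Lemma CbR_int f t : CbR f -> 0 < t -> mu.-integrable `[t, +oo[ (EFin \o gg f).
Proof. by move=> [cf sf] t0; apply: (@integrable_gg R n i f t Rb t0 cf sf). Qed.

Lemma tailB f g t : CbR f -> CbR g -> 0 < t ->
  tailint n i (f \- g) t = tailint n i f t - tailint n i g t.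
Proof.
move=> hf hg t0; rewrite !tailE -RintegralB //; try exact: CbR_int.
by apply: eq_Rintegral => s _; rewrite /gg /= mulrBl.
Qed.

Lemma tail_small f t c : CbR f -> 0 < t -> 0 <= c ->
  (forall s, t <= s -> `|s ^+ (n - i) * f s| <= c) -> `|tailint n i f t| <= c / t * Rb.
Proof.
move=> [cf sf] t0 c0 hc.
apply: le_trans (@tail_bound R n i f t Rb (c / t) t0 cf sf _) _.
  move=> s ts; have s0 := lt_le_trans t0 ts.
  have := hc s ts; rewrite -ggE normrM (gtr0_norm s0) => h.
  by rewrite ler_pdivlMr //; apply: le_trans h; rewrite mulrC; apply: ler_wpM2r.
by apply: ler_wpM2l; [rewrite divr_ge0 // ltW|apply: maxr_aux].
Qed.

Section Complete.
Variable u : nat -> R -> R.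
Hypothesis hu : forall k, D (u k).
Hypothesis hC : forall e : R, 0 < e -> exists N : nat, forall p q : nat,
  (N <= p)%N -> (N <= q)%N -> Dnorm n i (u p \- u q) < e.

Lemma hB p q : D (u p \- u q).
Proof. by rewrite subE; apply: DD => //; apply: DZ. Qed.

Lemma pt_cvg t : cvg (u k t @[k --> \oo]).
Proof.
case: (leP t 0) => t0.
  have -> : (fun k => u k t) = fun _ => 0 by apply/funext => k; apply: D_neg.
  exact: is_cvg_cst.
apply/cauchy_cvgP; apply: cauchy_exP => eps eps0.
have tw : 0 < t ^+ (n - i) by rewrite exprn_gt0.
have [N HN] := hC (mulr_gt0 eps0 tw).
exists (u N t); exists N => // k /= Nk.
have := P_le (hB N k) t0; rewrite /= normrM (gtr0_norm tw) => h.
have := le_lt_trans h (HN N k (leqnn N) Nk).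
by rewrite mulrC ltr_pM2r.
Qed.

Definition zl := fun t => lim (u k t @[k --> \oo]).

Lemma hz t : u k t @[k --> \oo] --> zl t.
Proof. exact: pt_cvg. Qed.


Lemma U1 e : 0 < e -> exists N, forall k t, (N <= k)%N -> 0 < t ->
  `|t ^+ (n - i) * (u k t - zl t)| <= e.
Proof.
move=> e0; have [N HN] := hC e0; exists N => k t Nk t0.
apply: (@flim_le _ \oo _ (fun q => `|t ^+ (n - i) * (u k t - u q t)|)).
  apply: cvg_norm; apply: cvgM; first exact: cvg_cst.
  by apply: cvgB; [exact: cvg_cst|exact: hz].
exists N => // q /= Nq; apply: le_trans (P_le (hB k q) t0) _.
by apply: ltW; apply: HN.
Qed.

Lemma zl_const t : (forall k, u k t = 0) -> zl t = 0.
Proof.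
move=> h; rewrite /zl (_ : (fun k => u k t) = fun _ => 0); first exact: lim_cst.
by apply/funext => k; apply: h.
Qed.

Lemma zl_supp t : Rb < t -> zl t = 0.
Proof. by move=> tR; apply: zl_const => k; apply: D_supp. Qed.
Lemma zl_neg t : t <= 0 -> zl t = 0.
Proof. by move=> tR; apply: zl_const => k; apply: D_neg. Qed.

Lemma U1' e c : 0 < e -> 0 < c -> exists N, forall s, c <= s -> `|u N s - zl s| <= e.
Proof.
move=> e0 c0; have cw0 : 0 < c ^+ (n - i) by rewrite exprn_gt0.
have [N HN] := U1 (mulr_gt0 e0 cw0); exists N => s cs.
have s0 := lt_le_trans c0 cs.
have := HN N s (leqnn N) s0; rewrite normrM (ger0_norm (exprn_ge0 _ (ltW s0))) => h.
rewrite -(ler_pM2l cw0) [X in _ <= X]mulrC; apply: le_trans h.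
by apply: ler_wpM2r => //; apply: pow_le => //; apply: ltW.
Qed.

Lemma zl_cont : {within `]0, +oo[, continuous zl}.
Proof.
rewrite continuous_open_subspace; last exact: open_pos.
move=> x; rewrite inE /= in_itv /= andbT => x0.
apply/cvgrPdist_le => eps eps0.
pose c := x / 2.
have c0 : 0 < c by rewrite divr_gt0.
have cx : c < x by rewrite /c ltr_pdivrMr // ltr_pMr // ltr1n.
have e3 : 0 < eps / 3 by rewrite divr_gt0.
have [N HN] := U1' e3 c0.
have cN := cont_pos (D_cont (hu N)) x0.
move/cvgrPdist_le: cN => /(_ _ e3) cN'.
near=> s.
have cs : c < s by near: s; exact: lt_nbhsr.
have hs : `|u N x - u N s| <= eps / 3 by near: s; exact: cN'.
rewrite (_ : zl x - zl s = (zl x - u N x) + (u N x - u N s) + (u N s - zl s)); last by ring.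
apply: le_trans (ler_normD _ _) _.
rewrite (_ : eps = eps / 3 + eps / 3 + eps / 3); last by field.
apply: lerD; last by apply: HN; apply: ltW.
apply: le_trans (ler_normD _ _) _; apply: lerD => //.
by rewrite distrC; apply: HN; apply: ltW.
Unshelve. all: by end_near.
Qed.

Lemma CbR_z : CbR zl.
Proof. by split; [exact: zl_cont|exact: zl_supp]. Qed.

Lemma tail_cvg t : 0 < t -> tailint n i (u q) t @[q --> \oo] --> tailint n i zl t.
Proof.
move=> t0; apply/cvgrPdist_le => eps eps0.
have c0 : 0 < eps * t / Rb by rewrite divr_gt0 // mulr_gt0.
have [N HN] := U1 c0.
exists N => // q /= Nq.
rewrite -tailB //; [|exact: CbR_z|exact: CbR_D].
apply: le_trans (tail_small _ t0 (ltW c0) _) _.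
- exact: CbR_B (CbR_z) (CbR_D (hu q)).
- move=> s ts; rewrite /= -opprB mulrN normrN.
  by apply: HN => //; apply: lt_le_trans ts.
by rewrite le_eqVlt; apply/orP; left; apply/eqP; field; rewrite !gt_eqF.
Qed.


Lemma U2 e : 0 < e -> exists N, forall k t, (N <= k)%N -> 0 < t ->
   `|Af (u k) t - Af zl t| <= e /\ `|Bf (u k \- zl) t| <= e.
Proof.
move=> e0; have [N HN] := hC e0; exists N => k t Nk t0.
have hA : Af (u q) t @[q --> \oo] --> Af zl t.
  exact: cvgM (cvg_cst _) (tail_cvg t0).
split.
  apply: (@flim_le _ \oo _ (fun q => `|Af (u k) t - Af (u q) t|)).
    by apply: cvg_norm; apply: cvgB; [exact: cvg_cst|exact: hA].
  exists N => // q /= Nq; rewrite -AB //; apply: le_trans (A_leD (hB k q) t0) _.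
  by apply: ltW; apply: HN.
have -> : Bf (u k \- zl) t = t ^+ (n - i) * (u k t - zl t) + (Af (u k) t - Af zl t).
  by rewrite /Bf /Af (tailB (CbR_D (hu k)) CbR_z t0) !mulrBr.
apply: (@flim_le _ \oo _ (fun q => `|t ^+ (n - i) * (u k t - u q t) + (Af (u k) t - Af (u q) t)|)).
  apply: cvg_norm; apply: cvgD.
    apply: cvgM; first exact: cvg_cst.
    by apply: cvgB; [exact: cvg_cst|exact: hz].
  by apply: cvgB; [exact: cvg_cst|exact: hA].
exists N => // q /= Nq.
have -> : t ^+ (n - i) * (u k t - u q t) + (Af (u k) t - Af (u q) t) = Bf (u k \- u q) t.
  by rewrite /Bf AB.
by apply: le_trans (B_leD (hB k q) t0) _; apply: ltW; apply: HN.
Qed.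

Lemma zl_tail : exists L : R, tailint n i zl t @[t --> 0^'+] --> L.
Proof.
pose Lk := fun k => lim (tailint n i (u k) t @[t --> 0^'+]).
have hLk : forall k, tailint n i (u k) t @[t --> 0^'+] --> Lk k.
  by move=> k; have [L hL] := D_tail (hu k); rewrite /Lk (cvg_lim _ hL).
have W0 : 0 < (n - i)%:R :> R by rewrite ltr0n.
have Tk : forall e, 0 < e -> exists N, forall p q t, (N <= p)%N -> (N <= q)%N -> 0 < t ->
    `|tailint n i (u p) t - tailint n i (u q) t| <= e.
  move=> e e0; have [N HN] := hC (mulr_gt0 e0 W0); exists N => p q t Np Nq t0.
  have := A_leD (hB p q) t0; rewrite AB // /Af -mulrBr normrM (gtr0_norm W0) => h.
  rewrite -(ler_pM2l W0); apply: (le_trans h); apply: ltW.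
  by rewrite mulrC; apply: HN.
have LC : forall e, 0 < e -> exists N, forall p q, (N <= p)%N -> (N <= q)%N ->
    `|Lk p - Lk q| <= e.
  move=> e e0; have [N HN] := Tk e e0; exists N => p q Np Nq.
  apply: (@flim_le _ (0^'+) _ (fun t => `|tailint n i (u p) t - tailint n i (u q) t|)).
    by apply: cvg_norm; apply: cvgB.
  by apply: near_pos => t t0; apply: HN.
have cL : cvg (Lk k @[k --> \oo]).
  apply/cauchy_cvgP; apply: cauchy_exP => e e0.
  have e2 : 0 < e / 2 by rewrite divr_gt0.
  have [N HN] := LC _ e2; exists (Lk N); exists N => // k /= Nk.
  by rewrite /ball /=; apply: le_lt_trans (HN N k (leqnn N) Nk) _; rewrite ltr_pdivrMr // ltr_pMr // ltr1n.
pose L := lim (Lk k @[k --> \oo]).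
exists L; apply/cvgrPdist_le => e e0.
have e3 : 0 < e / 3 by rewrite divr_gt0.
have [N1 HN1] := U2 (mulr_gt0 W0 e3).
have [N2 HN2] := LC _ e3.
pose N := maxn N1 N2.
have hLN : `|Lk N - L| <= e / 3.
  apply: (@flim_le _ \oo _ (fun q => `|Lk N - Lk q|)).
    by apply: cvg_norm; apply: cvgB; [exact: cvg_cst|exact: cL].
  by exists N => // q /= Nq; apply: HN2 => //; [rewrite leq_maxr|apply: leq_trans Nq; rewrite leq_maxr].
have := hLk N; move/cvgrPdist_le => /(_ _ e3) hN.
near=> t.
have t0 : 0 < t by near: t; exact: nbhs_right_gt.
have h1 : `|Lk N - tailint n i (u N) t| <= e / 3 by near: t; exact: hN.
have h2 : `|tailint n i (u N) t - tailint n i zl t| <= e / 3.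
  have [h _] := HN1 N t (leq_maxl _ _) t0.
  by move: h; rewrite /Af -mulrBr normrM (gtr0_norm W0) ler_pM2l.
rewrite (_ : L - tailint n i zl t = - (Lk N - L) + (Lk N - tailint n i (u N) t) +
   (tailint n i (u N) t - tailint n i zl t)); last by ring.
rewrite (_ : e = e / 3 + e / 3 + e / 3); last by field.
apply: le_trans (ler_normD _ _) _; apply: lerD => //.
by apply: le_trans (ler_normD _ _) _; apply: lerD; rewrite ?normrN.
Unshelve. all: by end_near.
Qed.


Lemma Dz : D zl.
Proof.
split; last exact: zl_supp.
split; first split; first exact: zl_cont.
  by split; [move=> t; apply: zl_neg|exists Rb; apply: zl_supp].
split; last exact: zl_tail.
apply/cvgrPdist_le => e e0.
have e2 : 0 < e / 2 by rewrite divr_gt0.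
have [N HN] := U1 e2.
have := D_lim (hu N); move/cvgrPdist_le => /(_ _ e2) hN.
near=> t.
have t0 : 0 < t by near: t; exact: nbhs_right_gt.
have h1 : `|0 - t ^+ (n - i) * u N t| <= e / 2 by near: t; exact: hN.
have h2 := HN N t (leqnn N) t0.
rewrite (_ : 0 - t ^+ (n - i) * zl t = (0 - t ^+ (n - i) * u N t) +
   t ^+ (n - i) * (u N t - zl t)); last by ring.
rewrite (_ : e = e / 2 + e / 2); last by field.
by apply: le_trans (ler_normD _ _) _; apply: lerD.
Unshelve. all: by end_near.
Qed.

Lemma complete_main : exists z, D z /\ Dnorm n i (u k \- z) @[k --> \oo] --> 0.
Proof.
exists zl; split; first exact: Dz.
apply/cvgrPdist_le => e e0.
have e2 : 0 < e / 2 by rewrite divr_gt0.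
have [N HN] := U2 e2.
exists N => // k /= Nk.
have Dk : D (u k \- zl) by rewrite subE; apply: DD => //; apply: DZ; apply: Dz.
rewrite sub0r normrN ger0_norm; last exact: Dnorm_ge0.
rewrite (_ : e = e / 2 + e / 2); last by field.
apply: Dnorm_le => t t0; have [h1 h2] := HN k t Nk t0 => //.
by rewrite AB //; apply: Dz.
Qed.

End Complete.
End Main.

Theorem lemma2p7 (R : realType) (n i : nat) (Rb : R) :
  (2 <= n)%N -> (1 <= i)%N -> (i <= n - 1)%N -> 0 < Rb ->
  (* D^n_{i,R} is a real vector space *)
  [/\ DnR n i Rb (fun _ => 0),
      (forall f g, DnR n i Rb f -> DnR n i Rb g -> DnR n i Rb (f \+ g)),
      (forall (a : R) f, DnR n i Rb f -> DnR n i Rb (fun t => a * f t)) &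
  (* ||.|| is a (finite, real-valued) norm on it *)
  [/\ (forall f, DnR n i Rb f ->
         has_ubound [set `|(n - i)%:R * tailint n i f t| | t in `]0, +oo[] /\
         has_ubound [set `|t ^+ (n - i) * f t + (n - i)%:R * tailint n i f t|
                 | t in `]0, +oo[]),
      (forall f, DnR n i Rb f -> 0 <= Dnorm n i f),
      (forall f, DnR n i Rb f -> Dnorm n i f = 0 -> f = (fun _ => 0)),
      (forall (a : R) f, DnR n i Rb f ->
         Dnorm n i (fun t => a * f t) = `|a| * Dnorm n i f) &
      (forall f g, DnR n i Rb f -> DnR n i Rb g ->
         Dnorm n i (f \+ g) <= Dnorm n i f + Dnorm n i g)] ] /\
  (* completeness *)
  (forall u : nat -> R -> R, (forall k, DnR n i Rb (u k)) ->
     (forall e : R, 0 < e -> exists N : nat, forall p q : nat,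
        (N <= p)%N -> (N <= q)%N -> Dnorm n i (u p \- u q) < e) ->
     exists z, DnR n i Rb z /\ Dnorm n i (u k \- z) @[k --> \oo] --> 0) /\
  (* density of C_c([0,oo)) \cap D^n_{i,R} *)
  (forall z, DnR n i Rb z -> forall e : R, 0 < e ->
     exists phi, DnR n i Rb phi /\
       (exists f, Cc0 f /\ forall t, 0 < t -> phi t = f t) /\
       Dnorm n i (z \- phi) < e).
Proof.
move=> h2 h1 hin Rb0.
have hw : (0 < n - i)%N.
  rewrite subn_gt0; apply: (leq_ltn_trans hin); rewrite subn1 ltn_predL.
  exact: ltnW.
split; last split.
- split.
  + exact: D0.
  + by move=> f g hf hg; apply: DD.
  + by move=> a f hf; apply: DZ.
  split.
  + by move=> f hf; split; [apply: (ubS1 Rb0 hf)|apply: (ubS2 Rb0 hf)].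
  + by move=> f hf; apply: (Dnorm_ge0 Rb0 hf).
  + by move=> f hf; apply: (Dnorm0 Rb0 hf).
  + by move=> a f hf; apply: (DnormZ Rb0 a hf).
  + by move=> f g hf hg; apply: (Dnorm_tri Rb0 hf hg).
- by move=> u hu hC; apply: (complete_main hw Rb0 hu hC).
- by move=> z hz e e0; apply: (density hw hz e0).
Qed.
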